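(* Let $q=q_n$ be the transpose top with random measure on $S_n$ and $u=u_n$ the uniform measure on $S_n$. For any sequence of nonnegative integers $(k_n)$ such that $(k_n-n\log n)/n\to-\infty$ as $n\to\infty$, we have $d_2(q^{(k_n)},u)\to\infty$ and $\|q^{(k_n)}-u\|_{TV}\to 1$ as $n\to\infty$.
   Context: The transpose top with random measure on $S_n$ is $q(\tau)=1/n$ if $\tau=(1,j)$, $1\le j\le n$ (with $(1,1)=e$), and $0$ otherwise. $q^{(k)}$ is the $k$-fold convolution power. $d_2(p,u)=\big(|G|\sum_{x\in G}|p(x)-u(x)|^2\big)^{1/2}$ and $\|p-u\|_{TV}=\sup_{A\subset G}(p(A)-u(A))$. *)

(* Defs.v *)
From mathcomp Require Import all_boot all_fingroup.
From Stdlib Require Import Reals.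
Unset Printing Implicit Defensive.

Local Open Scope R_scope.

Definition measure (n : nat) := {perm 'I_n} -> R.

Notation "\rsum_ ( x : T ) F" := (\big[Rplus/0%R]_(x : T) F)
  (at level 41, x at level 0, F at level 41) : R_scope.
Notation "\rsum_ ( x 'in' A ) F" := (\big[Rplus/0%R]_(x in A) F)
  (at level 41, x at level 0, F at level 41) : R_scope.

(* transpose top with random: q(tau) = 1/n if tau = (1 j), 1 <= j <= n,
   with (1 1) = e; 0 otherwise.  Position "1" is the ordinal of value 0. *)
Definition ttr (n : nat) : measure n := fun tau =>
  if [exists i : 'I_n, exists j : 'I_n, (nat_of_ord i == 0%nat) && (tau == tperm i j)]
  then / INR n else 0.

Definition unif (n : nat) : measure n := fun _ => / INR (#|{perm 'I_n}|).

Definition conv {n : nat} (p q : measure n) : measure n := fun x =>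
  \rsum_(y : {perm 'I_n}) (p y * q ((y^-1)%g * x)%g).

Definition dirac_e (n : nat) : measure n := fun x => if x == 1%g then 1 else 0.

Fixpoint conv_pow {n : nat} (q : measure n) (k : nat) : measure n :=
  match k with
  | O => dirac_e n
  | S k' => conv (conv_pow q k') q
  end.

Definition dist2 {n : nat} (p u : measure n) : R :=
  sqrt (INR (#|{perm 'I_n}|) * \rsum_(x : {perm 'I_n}) (Rabs (p x - u x) ^ 2)).

(* ||p - u||_TV = sup_{A subset G} (p(A) - u(A)); the empty set gives 0,
   so the maximum starting from 0 is exactly the supremum. *)
Definition tv {n : nat} (p u : measure n) : R :=
  \big[Rmax/0%R]_(A : {set {perm 'I_n}})
     ((\rsum_(x in A) p x) - (\rsum_(x in A) u x)).

(* Main.v *)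
From HB Require Import structures.
Require Import Defs.
From mathcomp Require Import all_boot all_fingroup.
From Stdlib Require Import Reals Lra Lia.
Unset Printing Implicit Defensive.
Local Open Scope R_scope.

Lemma RplusA' : associative Rplus. Proof. move=> *; ring. Qed.
Lemma RmultA' : associative Rmult. Proof. move=> *; ring. Qed.
HB.instance Definition _ := Monoid.isComLaw.Build R 0 Rplus RplusA' Rplus_comm Rplus_0_l.
HB.instance Definition _ := Monoid.isComLaw.Build R 1 Rmult RmultA' Rmult_comm Rmult_1_l.
HB.instance Definition _ := Monoid.isMulLaw.Build R 0 Rmult Rmult_0_l Rmult_0_r.
HB.instance Definition _ := Monoid.isAddLaw.Build R Rmult Rplus Rmult_plus_distr_r Rmult_plus_distr_l.

Definition tt1 (n : nat) (j : 'I_n.+1) : {perm 'I_n.+1} := tperm ord0 j.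

Lemma tt1_inj n : injective (tt1 n).
Proof. move=> i j H. have := congr1 (fun p : {perm _} => p ord0) H. by rewrite /tt1 !tpermL. Qed.

Lemma ttrE n z : ttr n.+1 z = if z \in [set tt1 n j | j : 'I_n.+1] then / INR n.+1 else 0.
Proof.
rewrite /ttr. congr (if _ then _ else _).
apply/idP/idP.
- move=> /existsP [i /existsP [j /andP [/eqP Hi /eqP ->]]].
  have -> : i = ord0 by apply: val_inj.
  apply/imsetP; exists j => //.
- move=> /imsetP [j _ ->]. apply/existsP; exists ord0; apply/existsP; exists j. by rewrite /tt1 !eqxx.
Qed.

Lemma sum_ttr n (h : {perm 'I_n.+1} -> R) :
  \rsum_(z : {perm 'I_n.+1}) (ttr n.+1 z * h z) = / INR n.+1 * \rsum_(j : 'I_n.+1) h (tt1 n j).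
Proof.
rewrite (bigID (fun z => z \in [set tt1 n j | j : 'I_n.+1])) /=.
rewrite [X in _ + X]big1; last by move=> z Hz; rewrite ttrE (negbTE Hz) Rmult_0_l.
rewrite Rplus_0_r big_distrr.
rewrite (big_imset _ (in2W (@tt1_inj n))).
apply: eq_bigr => j _. by rewrite ttrE imset_f.
Qed.

Fixpoint allseq n k : seq (seq 'I_n.+1) :=
  match k with
  | O => [:: [::]]
  | S k' => [seq x :: s | x <- enum 'I_n.+1, s <- allseq n k']
  end.

Definition prodw n (s : seq 'I_n.+1) : {perm 'I_n.+1} :=
  foldr (fun j acc => (acc * tt1 n j)%g) 1%g s.

Lemma big_allseqS n k (F : seq 'I_n.+1 -> R) :
  \big[Rplus/0]_(s <- allseq n k.+1) F s =
  \rsum_(x : 'I_n.+1) \big[Rplus/0]_(s <- allseq n k) F (x :: s).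
Proof.
rewrite /= big_allpairs_dep. rewrite big_enum. done.
Qed.

Lemma walk_sum n k (f : {perm 'I_n.+1} -> R) :
  \rsum_(x : {perm 'I_n.+1}) (conv_pow (ttr n.+1) k x * f x) =
  (/ INR n.+1) ^ k * \big[Rplus/0]_(s <- allseq n k) f (prodw n s).
Proof.
elim: k f => [|k IH] f.
- rewrite /= big_seq1 Rmult_1_l (bigD1 1%g) //= big1.
  + by rewrite /dirac_e eqxx Rmult_1_l Rplus_0_r.
  + move=> x /negbTE Hx. by rewrite /dirac_e Hx Rmult_0_l.
- rewrite /conv_pow -/(conv_pow (ttr n.+1) k) /conv.
  transitivity (\rsum_(y : {perm 'I_n.+1}) (conv_pow (ttr n.+1) k y *
       (/ INR n.+1 * \rsum_(j : 'I_n.+1) f (y * tt1 n j)%g))).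
  + under eq_bigr do rewrite big_distrl.
    rewrite exchange_big. apply: eq_bigr => y _.
    rewrite -(sum_ttr _ (fun z => f (y * z)%g)) big_distrr.
    rewrite (reindex_inj (mulgI y)).
    apply: eq_bigr => z _. rewrite mulKg /=. exact: Rmult_assoc.
  + rewrite (IH (fun y => / INR n.+1 * \rsum_(j : 'I_n.+1) f (y * tt1 n j)%g)) big_allseqS.
    change ((/ INR n.+1) ^ k.+1) with (/ INR n.+1 * (/ INR n.+1) ^ k).
    rewrite [in RHS]exchange_big (Rmult_comm (/ INR n.+1)) Rmult_assoc. congr (_ * _).
    rewrite big_distrr. by apply: eq_bigr => s _.
Qed.

Local Close Scope R_scope.

Lemma count_avoid n k (B : {set 'I_n.+1}) :
  \sum_(s <- allseq n k) (all (fun x => x \notin B) s : nat) = (n.+1 - #|B|) ^ k.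
Proof.
elim: k => [|k IH]; first by rewrite /= big_seq1.
rewrite /= big_allpairs_dep big_enum /=.
under eq_bigr => x _ do (under eq_bigr => s _ do rewrite /= -mulnb; rewrite -big_distrr IH /=).
rewrite -big_distrl /=. change ((n.+1 - #|B|) ^ k.+1) with ((n.+1 - #|B|) * (n.+1 - #|B|) ^ k). congr (_ * _).
transitivity (\sum_(x | x \notin B) 1); first by rewrite big_mkcond /= [RHS]big_mkcond; apply: eq_bigr => x _; case: (x \notin B).
rewrite sum1_card.
have -> : #|[pred x : 'I_n.+1 | x \notin B]| = #|~: B| by apply: eq_card => x; rewrite !inE.
by rewrite cardsCs setCK card_ord.
Qed.

Definition Xc n (s : seq 'I_n.+1) : nat := \sum_(j : 'I_n.+1 | j != ord0) (j \notin s : nat).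

Lemma notin_all n (j : 'I_n.+1) s : (j \notin s) = all (fun x => x \notin [set j]) s.
Proof. elim: s => [|x s IH] //=. by rewrite in_cons negb_or IH inE eq_sym. Qed.

Lemma notin2_all n (i j : 'I_n.+1) s : (i \notin s) && (j \notin s) = all (fun x => x \notin [set i; j]) s.
Proof.
elim: s => [|x s IH] //=. rewrite !in_cons !negb_or -IH !inE !negb_or (eq_sym x i) (eq_sym x j).
by case: (i == x); case: (j == x); case: (i \in s); case: (j \in s).
Qed.

Lemma card_nz n : #|[pred j : 'I_n.+1 | j != ord0]| = n.
Proof. have := cardC1 (ord0 : 'I_n.+1). rewrite card_ord /=. exact. Qed.

Lemma sumX n k : \sum_(s <- allseq n k) Xc n s = n * n ^ k.
Proof.
rewrite /Xc exchange_big /=.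
rewrite (eq_bigr (fun j => n ^ k)); last first.
  move=> j _. rewrite (eq_bigr (fun s => (all (fun x => x \notin [set j]) s : nat))); last by move=> s _; rewrite notin_all.
  by rewrite count_avoid cards1 subSS subn0.
rewrite sum_nat_const. have -> : #|(fun i : 'I_n.+1 => i != ord0)| = n by exact: card_nz. done.
Qed.

Lemma sumX2 n k : \sum_(s <- allseq n k) Xc n s * Xc n s <= n * n ^ k + n * (n * n.-1 ^ k).
Proof.
rewrite -mulnDr /Xc.
under eq_bigr => s _ do (rewrite big_distrl /=; under eq_bigr => i _ do (rewrite big_distrr /=)).
rewrite exchange_big /=.
under eq_bigr => i _ do rewrite exchange_big /=.
apply: (@leq_trans (\sum_(i : 'I_n.+1 | i != ord0) (n ^ k + n * n.-1 ^ k))); last first.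
  rewrite sum_nat_const. have -> : #|(fun i : 'I_n.+1 => i != ord0)| = n by exact: card_nz. done.
apply: leq_sum => i Hi.
rewrite (bigD1 i) //=. apply: leq_add.
- rewrite (eq_bigr (fun s => (all (fun x => x \notin [set i]) s : nat))); last first.
    by move=> s _; rewrite mulnb andbb notin_all.
  by rewrite count_avoid cards1 subn1.
- rewrite (eq_bigr (fun j => n.-1 ^ k)); last first.
    move=> j /andP [_ Hji]. rewrite (eq_bigr (fun s => (all (fun x => x \notin [set i; j]) s : nat))); last first.
      by move=> s _; rewrite mulnb notin2_all.
    by rewrite count_avoid cards2 eq_sym Hji /= subSS subn1.
  apply: leq_trans (_ : \sum_(j : 'I_n.+1 | j != ord0) n.-1 ^ k <= _).
    rewrite big_mkcond [X in _ <= X]big_mkcond /=. apply: leq_sum => j _.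
    by case: (j != ord0); case: (j != i).
  rewrite sum_nat_const. have -> : #|(fun i : 'I_n.+1 => i != ord0)| = n by exact: card_nz. done.
Qed.

Lemma count_all n k : \sum_(s <- allseq n k) 1 = n.+1 ^ k.
Proof.
have := count_avoid n k set0. rewrite cards0 subn0 => <-. apply: eq_bigr => s _.
suff -> : all (fun x => x \notin (set0 : {set 'I_n.+1})) s by [].
by apply/allP => x _; rewrite inE.
Qed.

Lemma prodw_fix n (s : seq 'I_n.+1) (j : 'I_n.+1) : j != ord0 -> j \notin s -> prodw n s j = j.
Proof.
move=> Hj. elim: s => [|x s IH]; first by rewrite /= perm1.
rewrite in_cons negb_or => /andP [Hjx Hs].
rewrite /= permM IH // /tt1 tpermD // eq_sym //.
Qed.

Definition fixc n (p : {perm 'I_n.+1}) : nat := #|('Fix_([set: 'I_n.+1] | 'P)[p])%g|.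

Lemma Xc_le_fix n s : Xc n s <= fixc n (prodw n s).
Proof.
rewrite /Xc /fixc.
have -> : \sum_(j : 'I_n.+1 | j != ord0) (j \notin s : nat) = #|[set j : 'I_n.+1 | (j != ord0) && (j \notin s)]|.
  rewrite -sum1_card big_mkcond [RHS]big_mkcond /=. apply: eq_bigr => j _. rewrite inE.
  by case: (j != ord0); case: (j \notin s).
apply: subset_leq_card. apply/subsetP => j. rewrite inE => /andP [H1 H2].
rewrite in_setI in_setT /=. apply/afix1P. by rewrite /= apermE prodw_fix.
Qed.

Lemma burnside n : \sum_(p : {perm 'I_n.+1}) fixc n p = #|{perm 'I_n.+1}|.
Proof.
have acts : [acts [set: {perm 'I_n.+1}]%G, on [set: 'I_n.+1] | 'P%act].
  by apply/actsP => ? _ ?; rewrite !inE.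
have := @Frobenius_Cauchy _ _ _ 'P%act [set: {perm 'I_n.+1}]%G [set: 'I_n.+1] acts.
have Horb : [set orbit 'P%act [set: {perm 'I_n.+1}]%G x | x in [set: 'I_n.+1]] = [set [set: 'I_n.+1]].
  apply/setP => Y. rewrite inE. apply/imsetP/eqP.
  - move=> [x _ ->]. apply/setP => y. rewrite inE. apply/orbitP. exists (tperm x y); first by rewrite inE.
    by rewrite /= apermE tpermL.
  - move=> ->. exists ord0; first by rewrite inE.
    apply/setP => y. rewrite inE. symmetry. apply/orbitP. exists (tperm ord0 y); first by rewrite inE.
    by rewrite /= apermE tpermL.
rewrite Horb cards1 mul1n cardsT /fixc => <-.
apply: eq_bigl => p. by rewrite inE.
Qed.
Local Open Scope R_scope.

Lemma INR_sum (I : Type) (r : seq I) (P : pred I) (F : I -> nat) :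
  INR (\sum_(i <- r | P i) F i)%nat = \big[Rplus/0]_(i <- r | P i) INR (F i).
Proof. apply: (big_morph INR) => //. move=> x y. exact: plus_INR. Qed.

Lemma Rle_big (I : Type) (r : seq I) (P : pred I) (F G : I -> R) :
  (forall i, P i -> F i <= G i) ->
  \big[Rplus/0]_(i <- r | P i) F i <= \big[Rplus/0]_(i <- r | P i) G i.
Proof. move=> H. apply: (big_ind2 (fun x y => x <= y)) => //; [lra | move=> *; lra]. Qed.

Lemma Rle0_big (I : Type) (r : seq I) (P : pred I) (F : I -> R) :
  (forall i, P i -> 0 <= F i) -> 0 <= \big[Rplus/0]_(i <- r | P i) F i.
Proof. move=> H. apply: (big_ind (fun x => 0 <= x)) => //; [lra | move=> *; lra]. Qed.

Definition mu n k := INR n * (INR n / INR n.+1) ^ k.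
Definition cst n k := (/ INR n.+1) ^ k.
Definition Yv n (s : seq 'I_n.+1) : R := INR (Xc n s).
Definition bad n k (s : seq 'I_n.+1) : R := if Rlt_dec (Yv n s) (mu n k / 2) then 1 else 0.

Lemma INRS_pos n : 0 < INR n.+1.
Proof. apply: lt_0_INR. apply/ltP. done. Qed.

Lemma cS1 n k : cst n k * INR (n * n ^ k)%nat = mu n k.
Proof.
rewrite /cst /mu mult_INR pow_INR /Rdiv Rpow_mult_distr. ring.
Qed.

Lemma cS0 n k : cst n k * INR (n.+1 ^ k)%nat = 1.
Proof.
rewrite /cst pow_INR -Rpow_mult_distr Rinv_l ?pow1 //. have := INRS_pos n. lra.
Qed.

Lemma cB2 n k : cst n k * INR (n * n ^ k + n * (n * n.-1 ^ k))%nat <= mu n k + mu n k ^ 2.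
Proof.
rewrite plus_INR Rmult_plus_distr_l cS1. apply: Rplus_le_compat_l.
have Hp := INRS_pos n.
rewrite /cst /mu !mult_INR !pow_INR.
case: n Hp => [|n] Hp; first by rewrite /= ; lra.
rewrite -pred_Sn.
set x := INR n.+1. set r := / INR n.+2.
have Hr : 0 < r by apply: Rinv_0_lt_compat.
have Hx : INR n.+2 = x + 1 by rewrite S_INR.
have Hx0 : 0 <= INR n by apply: pos_INR.
have Hxn : x = INR n + 1 by rewrite /x S_INR.
have key : r * INR n <= (x * r) ^ 2.
  have Hrr : r * (x + 1) = 1 by rewrite /r -Hx; apply: Rinv_l; lra.
  have : INR n <= x * x * r by nra.
  nra.
have := pow_incr (r * INR n) ((x * r) ^ 2) k.
move=> H.
have H' : (r * INR n) ^ k <= ((x * r) ^ 2) ^ k by apply: H; split; [nra | exact key].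
rewrite /Rdiv.
rewrite -/r.
replace (r ^ k * (x * (x * INR n ^ k))) with (x * x * (r * INR n) ^ k) by (rewrite Rpow_mult_distr; ring).
replace ((x * (x * r) ^ k) ^ 2) with (x * x * ((x * r) ^ 2) ^ k) by (rewrite /= Rmult_1_r Rpow_mult_distr; ring).
apply: Rmult_le_compat_l => //. nra.
Qed.

Lemma cheb n k : 0 < mu n k ->
  cst n k * \big[Rplus/0]_(s <- allseq n k) bad n k s <= 4 / mu n k.
Proof.
move=> Hmu. set m := mu n k in Hmu *.
have Hc : 0 < cst n k by apply: pow_lt; apply: Rinv_0_lt_compat; apply: INRS_pos.
have Hpt : forall s, bad n k s <= (4 / (m * m)) * ((Yv n s - m) * (Yv n s - m)).
  move=> s. rewrite /bad -/m. case: Rlt_dec => H /=.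
  - have : m / 2 <= m - Yv n s by lra.
    move=> H2. have H3 : m * m / 4 <= (Yv n s - m) * (Yv n s - m).
      have := Rmult_le_compat (m / 2) (m - Yv n s) (m / 2) (m - Yv n s). move=> HH.
      have HH2 := HH ltac:(lra) ltac:(lra) ltac:(lra) ltac:(lra). replace ((Yv n s - m) * (Yv n s - m)) with ((m - Yv n s) * (m - Yv n s)) by ring. lra.
    apply: (Rle_trans _ (4 / (m * m) * (m * m / 4))); first by right; field; lra.
    apply: Rmult_le_compat_l => //. apply: Rle_mult_inv_pos; nra.
  - apply: Rmult_le_pos; [apply: Rle_mult_inv_pos; nra | apply: Rle_0_sqr].
have Hsplit : \big[Rplus/0]_(s <- allseq n k) ((Yv n s - m) * (Yv n s - m)) =
   INR (\sum_(s <- allseq n k) Xc n s * Xc n s)%nat + (- 2 * m) * INR (\sum_(s <- allseq n k) Xc n s)%nat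
   + m * m * INR (\sum_(s <- allseq n k) 1)%nat.
  rewrite !INR_sum !big_distrr -!big_split /=. apply: eq_bigr => s _.
  rewrite /Yv mult_INR /=. ring.
have HB2 : cst n k * INR (\sum_(s <- allseq n k) Xc n s * Xc n s)%nat <= m + m ^ 2.
  apply: Rle_trans (cB2 n k). apply: Rmult_le_compat_l; first lra.
  apply: le_INR. apply/leP. exact: sumX2.
have HQ : cst n k * \big[Rplus/0]_(s <- allseq n k) ((Yv n s - m) * (Yv n s - m)) <= m.
  rewrite Hsplit sumX count_all !Rmult_plus_distr_l.
  have E1 := cS1 n k. have E0 := cS0 n k. rewrite -/m in E1.
  replace (cst n k * (-2 * m * INR (n * n ^ k))) with (-2 * m * (cst n k * INR (n * n ^ k))) by ring.
  replace (cst n k * (m * m * INR (n.+1 ^ k))) with (m * m * (cst n k * INR (n.+1 ^ k))) by ring.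
  rewrite E1 E0. nra.
apply: Rle_trans (_ : cst n k * ((4 / (m * m)) * \big[Rplus/0]_(s <- allseq n k) ((Yv n s - m) * (Yv n s - m))) <= _).
  apply: Rmult_le_compat_l; first lra. rewrite big_distrr. by apply: Rle_big => s _.
replace (cst n k * (4 / (m * m) * \big[Rplus/0]_(s <- allseq n k) ((Yv n s - m) * (Yv n s - m))))
  with (4 / (m * m) * (cst n k * \big[Rplus/0]_(s <- allseq n k) ((Yv n s - m) * (Yv n s - m)))) by ring.
apply: Rle_trans (_ : 4 / (m * m) * m <= _).
  apply: Rmult_le_compat_l => //. apply: Rle_mult_inv_pos; nra.
right. field. lra.
Qed.
Local Open Scope R_scope.

Lemma bigmax_ge (T : finType) (F : T -> R) (A0 : T) : F A0 <= \big[Rmax/0]_(A : T) F A.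
Proof.
have : A0 \in index_enum T by rewrite mem_index_enum.
elim: (index_enum T) => [|a r IH] //. rewrite in_cons big_cons => /orP [/eqP -> | H].
- exact: Rmax_l.
- apply: Rle_trans (IH H) _. exact: Rmax_r.
Qed.

Lemma bigmax_le (T : finType) (F : T -> R) (b : R) : 0 <= b -> (forall A, F A <= b) -> \big[Rmax/0]_(A : T) F A <= b.
Proof. move=> H0 H. apply: (big_ind (fun x => x <= b)) => //. move=> x y; exact: Rmax_lub. Qed.

Lemma conv_pow_ge0 n k x : 0 <= conv_pow (ttr n) k x.
Proof.
elim: k x => [|k IH] x /=.
- rewrite /dirac_e. case: (x == 1%g); lra.
- rewrite /conv. apply: Rle0_big => y _. apply: Rmult_le_pos; first exact: IH.
  rewrite /ttr. case: ifP => _; last lra. destruct n; [rewrite /= Rinv_0; lra|].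
  left. apply: Rinv_0_lt_compat. exact: INRS_pos.
Qed.

Lemma sum_rsum (I : Type) (r : seq I) (P : pred I) (c : R) :
  \big[Rplus/0]_(i <- r | P i) c = INR (\sum_(i <- r | P i) 1)%nat * c.
Proof. rewrite INR_sum big_distrl /=. apply: eq_bigr => i _. ring. Qed.

Lemma total_mass n k : \rsum_(x : {perm 'I_n.+1}) conv_pow (ttr n.+1) k x = 1.
Proof.
transitivity (\rsum_(x : {perm 'I_n.+1}) (conv_pow (ttr n.+1) k x * 1)); first by apply: eq_bigr => x _; ring.
rewrite walk_sum.
rewrite sum_rsum count_all Rmult_1_r. exact: cS0.
Qed.

Definition goodA n k : {set {perm 'I_n.+1}} :=
  [set x | if Rle_dec (mu n k / 2) (INR (fixc n x)) then true else false].

Lemma mem_goodA n k x : reflect (mu n k / 2 <= INR (fixc n x)) (x \in goodA n k).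
Proof. rewrite inE. case: Rle_dec => H /=; [by constructor | by constructor]. Qed.

Lemma pA_ge n k : 0 < mu n k ->
  1 - 4 / mu n k <= \rsum_(x in goodA n k) conv_pow (ttr n.+1) k x.
Proof.
move=> Hmu.
have -> : \rsum_(x in goodA n k) conv_pow (ttr n.+1) k x =
   \rsum_(x : {perm 'I_n.+1}) (conv_pow (ttr n.+1) k x * (if x \in goodA n k then 1 else 0)).
  rewrite big_mkcond /=. apply: eq_bigr => x _. case: (x \in goodA n k); ring.
rewrite walk_sum.
have Hc : 0 < cst n k by apply: pow_lt; apply: Rinv_0_lt_compat; apply: INRS_pos.
apply: Rle_trans (_ : cst n k * \big[Rplus/0]_(s <- allseq n k) (1 - bad n k s) <= _).
  have Hsp : \big[Rplus/0]_(s <- allseq n k) (1 - bad n k s) =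
     \big[Rplus/0]_(s <- allseq n k) 1 + (-1) * \big[Rplus/0]_(s <- allseq n k) bad n k s.
    rewrite big_distrr -big_split /=. apply: eq_bigr => s _. ring.
  rewrite Hsp sum_rsum count_all Rmult_1_r Rmult_plus_distr_l.
  change ((/ INR n.+1) ^ k) with (cst n k). rewrite cS0.
  have := cheb n k Hmu. lra.
apply: Rmult_le_compat_l; first lra.
apply: Rle_big => s _. rewrite /bad. case: Rlt_dec => H /=.
- case: (prodw n s \in goodA n k); lra.
- have : prodw n s \in goodA n k.
    apply/mem_goodA. apply: Rle_trans (_ : Yv n s <= _); first lra.
    apply: le_INR. apply/leP. exact: Xc_le_fix.
  move=> ->. lra.
Qed.

Lemma uA_le n k : 0 < mu n k ->
  \rsum_(x in goodA n k) unif n.+1 x <= 2 / mu n k.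
Proof.
move=> Hmu. set N := INR #|{perm 'I_n.+1}|.
have HN : 0 < N by apply: lt_0_INR; apply/ltP; apply/card_gt0P; by exists 1%g.
apply: Rle_trans (_ : \rsum_(x in goodA n k) (2 / mu n k * / N * INR (fixc n x)) <= _).
  apply: Rle_big => x /mem_goodA Hx. rewrite /unif -/N.
  apply: (Rle_trans _ (2 / mu n k * / N * (mu n k / 2))); first by right; field; lra.
  apply: Rmult_le_compat_l => //. apply: Rmult_le_pos; [apply: Rle_mult_inv_pos; lra | left; apply: Rinv_0_lt_compat; lra].
apply: Rle_trans (_ : \rsum_(x : {perm 'I_n.+1}) (2 / mu n k * / N * INR (fixc n x)) <= _).
  rewrite big_mkcond /=. apply: Rle_big => x _. case: (x \in goodA n k); first lra.
  apply: Rmult_le_pos; [apply: Rmult_le_pos; [apply: Rle_mult_inv_pos; lra | left; apply: Rinv_0_lt_compat; lra] | apply: pos_INR].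
rewrite -big_distrr /= -INR_sum burnside -/N. right. field. lra.
Qed.

Lemma unif_pos n x : 0 < unif n.+1 x.
Proof.
rewrite /unif. apply: Rinv_0_lt_compat. apply: lt_0_INR; apply/ltP; apply/card_gt0P; by exists 1%g.
Qed.

Lemma tv_lower n k : 0 < mu n k -> 1 - 6 / mu n k <= tv (conv_pow (ttr n.+1) k) (unif n.+1).
Proof.
move=> Hmu. rewrite /tv. apply: (Rle_trans _ _ _ _ (bigmax_ge _ (fun A : {set {perm 'I_n.+1}} => \rsum_(x in A) conv_pow (ttr n.+1) k x - \rsum_(x in A) unif n.+1 x) (goodA n k))).
have := pA_ge n k Hmu. have := uA_le n k Hmu.
have -> : 6 / mu n k = 4 / mu n k + 2 / mu n k by field; lra.
lra.
Qed.

Lemma tv_upper n k : tv (conv_pow (ttr n.+1) k) (unif n.+1) <= 1.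
Proof.
apply: bigmax_le; first lra. move=> B.
have H1 : \rsum_(x in B) conv_pow (ttr n.+1) k x <= 1.
  rewrite -(total_mass n k) big_mkcond /=. apply: Rle_big => x _.
  case: (x \in B); [lra | exact: conv_pow_ge0].
have H2 : 0 <= \rsum_(x in B) unif n.+1 x.
  apply: Rle0_big => x _. left; exact: unif_pos.
lra.
Qed.

Lemma d2_lower n k : 12 <= mu n k -> sqrt (mu n k / 8) <= dist2 (conv_pow (ttr n.+1) k) (unif n.+1).
Proof.
move=> Hmu12. have Hmu : 0 < mu n k by lra.
rewrite /dist2. apply: sqrt_le_1_alt.
set N := INR #|{perm 'I_n.+1}|.
have HN : 0 < N by apply: lt_0_INR; apply/ltP; apply/card_gt0P; by exists 1%g.
set m := mu n k in Hmu Hmu12 *.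
set s := m / 4. set t := s / N.
set p := conv_pow (ttr n.+1) k. set u := unif n.+1.
set pA := \rsum_(x in goodA n k) p x. set uA := \rsum_(x in goodA n k) u x.
have HpA : 1 - 4 / m <= pA by exact: pA_ge.
have HuA : uA <= 2 / m by exact: uA_le.
have HuA0 : 0 <= uA by apply: Rle0_big => x _; left; exact: unif_pos.
have Ht : 0 < t by rewrite /t /s; apply: Rlt_mult_inv_pos; lra.
have Hu : forall x, u x = / N by [].
have S1 : \rsum_(x in goodA n k) (2 * t * p x + (- 2 * t - t * s) * u x) <=
          \rsum_(x : {perm 'I_n.+1}) Rabs (p x - u x) ^ 2.
  apply: Rle_trans (_ : \rsum_(x in goodA n k) (Rabs (p x - u x) ^ 2) <= _).
    apply: Rle_big => x _. rewrite pow2_abs.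
    have E : t * s * u x = t * t by rewrite Hu /t; field; lra.
    have := Rle_0_sqr (p x - u x - t). rewrite /Rsqr. nra.
  rewrite [X in X <= _]big_mkcond. apply: Rle_big => x _.
  case: (x \in goodA n k); first lra. apply: pow_le. exact: Rabs_pos.
have S2 : \rsum_(x in goodA n k) (2 * t * p x + (- 2 * t - t * s) * u x) = 2 * t * pA + (- 2 * t - t * s) * uA.
  by rewrite big_split /= -!big_distrr.
apply: Rle_trans (_ : N * (2 * t * pA + (- 2 * t - t * s) * uA) <= _); last first.
  apply: Rmult_le_compat_l; first lra. by rewrite -S2.
have Ets : N * t = s by rewrite /t; field; lra.
replace (N * (2 * t * pA + (-2 * t - t * s) * uA)) with (2 * (N * t) * pA - (2 * (N * t) + (N * t) * s) * uA) by ring.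
rewrite Ets /s.
have H1 : 2 * (m / 4) * (1 - 4 / m) <= 2 * (m / 4) * pA by apply: Rmult_le_compat_l; lra.
have H2 : (2 * (m / 4) + m / 4 * (m / 4)) * uA <= (2 * (m / 4) + m / 4 * (m / 4)) * (2 / m).
  apply: Rmult_le_compat_l => //. nra.
have E1 : 2 * (m / 4) * (1 - 4 / m) = m / 2 - 2 by field; lra.
have E2 : (2 * (m / 4) + m / 4 * (m / 4)) * (2 / m) = 1 + m / 8 by field; lra.
lra.
Qed.
Local Open Scope R_scope.

Lemma exp_le' x y : x <= y -> exp x <= exp y.
Proof. case=> H; [left; exact: exp_increasing | right; by rewrite H]. Qed.

Lemma ln_le_sub1 y : 0 < y -> ln y <= y - 1.
Proof.
move=> Hy. case: (Rle_dec (ln y) (y - 1)) => // /Rnot_le_lt H.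
have := exp_increasing _ _ H. rewrite exp_ln //. have := exp_ineq1_le (y - 1). lra.
Qed.

Lemma mu_lower n k c : (1 <= n)%nat ->
  c = - ((INR k - INR n.+1 * ln (INR n.+1)) / INR n.+1) -> 0 <= c -> c / 6 <= mu n k.
Proof.
move=> Hn Hc Hc0.
set x := INR n. have Hx : 1 <= x by rewrite /x -[1]/(INR 1); apply: le_INR; apply/leP.
have HN : INR n.+1 = x + 1 by rewrite S_INR.
rewrite HN in Hc. set L := ln (x + 1) in Hc.
have HL : L <= x by have := ln_le_sub1 (x + 1) ltac:(lra); rewrite /L; lra.
set K := INR k in Hc.
have HK0 : 0 <= K by apply: pos_INR.
have HK : K = (x + 1) * L - c * (x + 1) by rewrite Hc; field; lra.
rewrite /mu -/x HN.
set a := x / (x + 1).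
have Ha : 0 < a by apply: Rlt_mult_inv_pos; lra.
have Hak : a ^ k = exp (K * ln a) by rewrite -ln_pow // exp_ln //; apply: pow_lt.
have Hlna : - (1 / x) <= ln a.
  have -> : a = / ((x + 1) / x) by rewrite /a; field; lra.
  rewrite ln_Rinv; last by apply: Rlt_mult_inv_pos; lra.
  have := ln_le_sub1 ((x + 1) / x) ltac:(apply: Rlt_mult_inv_pos; lra).
  have -> : (x + 1) / x - 1 = 1 / x by field; lra.
  lra.
have H1 : - K / x <= K * ln a.
  have -> : - K / x = K * (- (1 / x)) by field; lra.
  by apply: Rmult_le_compat_l.
have H2 : - L - 1 + c <= - K / x.
  rewrite HK.
  have -> : - ((x + 1) * L - c * (x + 1)) / x = - L - L / x + c + c / x by field; lra.
  have : L / x <= 1 by apply: (Rmult_le_reg_r x); [lra | rewrite /Rdiv Rmult_assoc Rinv_l; lra].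
  have : 0 <= c / x by apply: Rle_mult_inv_pos; lra.
  lra.
have H3 : exp (- L - 1 + c) <= a ^ k by rewrite Hak; apply: exp_le'; lra.
have H4 : exp (- L - 1 + c) = / (x + 1) * / exp 1 * exp c.
  rewrite !exp_plus !exp_Ropp /L exp_ln; [ring | lra].
have H5 : c <= exp c by have := exp_ineq1_le c; lra.
have H6 : / 3 <= / exp 1 by apply: Rinv_le_contravar; [apply: exp_pos | exact: exp_le_3].
have H7 : c / 6 <= x * (/ (x + 1) * / exp 1 * exp c).
  have E : x * (/ (x + 1) * / exp 1 * exp c) = (x / (x + 1)) * (/ exp 1) * exp c by have := exp_pos 1; move=> ?; field; repeat split; lra.
  rewrite E.
  have Hxx : / 2 <= x / (x + 1).
    have -> : x / (x + 1) = 1 - / (x + 1) by field; lra.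
    have : / (x + 1) <= / 2 by apply: Rinv_le_contravar; lra.
    lra.
  have : / 2 * / 3 * c <= (x / (x + 1)) * (/ exp 1) * exp c.
    apply: Rmult_le_compat; [nra | lra | | lra].
    apply: Rmult_le_compat; lra.
  lra.
apply: Rle_trans H7 _. rewrite -H4. apply: Rmult_le_compat_l; lra.
Qed.
Local Open Scope R_scope.

Lemma per_n n kk T : (2 <= n)%nat -> 12 <= T ->
  6 * T < - ((INR kk - INR n * ln (INR n)) / INR n) ->
  sqrt (T / 8) <= dist2 (conv_pow (ttr n) kk) (unif n) /\
  1 - 6 / T <= tv (conv_pow (ttr n) kk) (unif n) /\
  tv (conv_pow (ttr n) kk) (unif n) <= 1.
Proof.
case: n => [|n] //. move=> Hn HT Hc.
have Hmu : T < mu n kk.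
  have := mu_lower n kk _ Hn erefl ltac:(lra). lra.
split; [|split].
- apply: Rle_trans (d2_lower n kk ltac:(lra)). apply: sqrt_le_1_alt. lra.
- apply: Rle_trans (tv_lower n kk ltac:(lra)).
  have : 6 / mu n kk <= 6 / T.
    apply: Rmult_le_compat_l; first lra. apply: Rinv_le_contravar; lra.
  lra.
- exact: tv_upper.
Qed.

Lemma proposition3p2_aux (k : nat -> nat) :
  cv_infty (fun n => - ((INR (k n) - INR n * ln (INR n)) / INR n))%R ->
  cv_infty (fun n => dist2 (conv_pow (ttr n) (k n)) (unif n)) /\
  Un_cv (fun n => tv (conv_pow (ttr n) (k n)) (unif n)) 1%R.
Proof.
move=> Hk. split.
- move=> M. set T := Rmax 12 (8 * (Rabs M + 1) ^ 2).
  have HT1 : 12 <= T by apply: Rmax_l.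
  have HT2 : 8 * (Rabs M + 1) ^ 2 <= T by apply: Rmax_r.
  have [N0 HN0] := Hk (6 * T).
  exists (maxn N0 2) => n Hn.
  have Hn' : leq (maxn N0 2) n by apply/leP.
  have Hn1 : le N0 n by apply/leP; exact: leq_trans (leq_maxl _ _) Hn'.
  have Hn2 : leq 2 n by exact: leq_trans (leq_maxr N0 2) Hn'.
  have [Hd _] := per_n n (k n) T Hn2 HT1 (HN0 n Hn1).
  apply: Rlt_le_trans Hd.
  have HM : sqrt ((Rabs M + 1) ^ 2) <= sqrt (T / 8) by apply: sqrt_le_1_alt; lra.
  rewrite sqrt_pow2 in HM; last by have := Rabs_pos M; lra.
  have := Rle_abs M. lra.
- move=> eps Heps. set T := Rmax 12 (6 / eps + 1).
  have HT1 : 12 <= T by apply: Rmax_l.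
  have HT2 : 6 / eps + 1 <= T by apply: Rmax_r.
  have [N0 HN0] := Hk (6 * T).
  exists (maxn N0 2) => n Hn.
  have Hn' : leq (maxn N0 2) n by apply/leP.
  have Hn1 : le N0 n by apply/leP; exact: leq_trans (leq_maxl _ _) Hn'.
  have Hn2 : leq 2 n by exact: leq_trans (leq_maxr N0 2) Hn'.
  have [_ [Hl Hu]] := per_n n (k n) T Hn2 HT1 (HN0 n Hn1).
  rewrite /Rdist Rabs_left1; last lra.
  have : 6 / T < eps.
    apply: (Rmult_lt_reg_r T); first lra.
    rewrite /Rdiv Rmult_assoc Rinv_l; last lra.
    have : 6 / eps < T by lra.
    move=> H. have := Rmult_lt_compat_l eps _ _ Heps H.
    rewrite /Rdiv. have -> : eps * (6 * / eps) = 6 by field; lra. lra.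
  lra.
Qed.

Local Close Scope R_scope.

Theorem proposition3p2 (k : nat -> nat) :
  cv_infty (fun n => - ((INR (k n) - INR n * ln (INR n)) / INR n))%R ->
  cv_infty (fun n => dist2 (conv_pow (ttr n) (k n)) (unif n)) /\
  Un_cv (fun n => tv (conv_pow (ttr n) (k n)) (unif n)) 1%R.
Proof. exact: proposition3p2_aux. Qed.
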